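(* Under the standing assumptions below, for every $s\in I_{\mathcal{C}}$, $$\frac{\partial F_{2n}}{\partial\lambda}(s,1)=\sum_{i=0}^{2n-1}\frac{t(s_i,\theta_i)}{\cos\theta_0}\,\frac{d\theta_0}{d\lambda}\Big|_{\lambda=1}+\sum_{k=1}^{2n-1}(-1)^k\theta_k\sum_{i=k}^{2n-1}\frac{t(s_i,\theta_i)}{\cos\theta_0},$$ where $s_0=s$, $s_k=F_k(s,1)$ and $\theta_k=\hat\theta_k$.
   Context: Let $P$ be a simply connected polygon with $d$ sides labeled $1,\dots,d$, $\partial P$ oriented anticlockwise, and let $\Phi$ be its billiard map, written in coordinates $(s,\theta)$ ($s$ the arc-length parameter on $\partial P$, $\theta\in(-\pi/2,\pi/2)$ the oriented angle from the inward normal). $\beta_{i,j}$ is $\pi$ minus the angle formed by the oriented sides $i$ and $j$, so that the angle after a collision from side $i$ to side $j$ is $\beta_{i,j}-\theta$. For $\lambda>0$, $R_\lambda(s,\theta)=(s,\lambda\theta)$. Let $\ell_i$ be the line supporting side $i$ and $x_i$ its arc-length parametrization extending that of side $i$. For distinct sides $i,j$, $\Phi_{i,j}(s,\theta):=(s',\beta_{i,j}-\theta)$, where $x_j(s')$ is the intersection with $\ell_j$ of the line through $x_i(s)$ whose direction makes angle $\theta$ with the inward normal of side $i$ (defined when $|\beta_{i,j}-\theta|<\pi/2$; it agrees with $\Phi$ for genuine collisions from side $i$ to side $j$). $t(s,\theta)$ denotes the oriented length of the segment joining $x_i(s)$ and $x_j(s')$ along this oriented line. Standing assumptions: $\mathcal{C}$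 is a periodic cylinder of $\Phi$ (maximal family of parallel periodic orbits with common itinerary) of even period $2n>2$ with itinerary $i_0,\dots,i_{2n-1}$ (indices mod $2n$) and collision angles $\hat\theta_0,\dots,\hat\theta_{2n-1}$, with $\hat\theta_0=\frac{1}{2n}\sum_{k=0}^{2n-1}(-1)^{k+1}k\beta_{i_k,i_{k+1}}$. Define $\theta_0(\lambda):=\frac{1}{\lambda^{2n}-1}\sum_{k=0}^{2n-1}(-\lambda)^{2n-k}\beta_{i_k,i_{k+1}}$ (extended analytically to $\lambda=1$ by $\hat\theta_0$), $\theta_k(\lambda):=\lambda(\beta_{i_{k-1},i_k}-\theta_{k-1}(\lambda))$ for $k=1,\dots,2n$; fix $\delta>0$ with all $\theta_k(\lambda)\in(-\pi/2,\pi/2)$ for $\lambda\in(1-\delta,1+\delta)$, and set $F_k(s,\lambda):=\pi_1\circ R_\lambda\circ\Phi_{i_{k-1},i_k}\circ\cdots\circ R_\lambda\circ\Phi_{i_0,i_1}(s,\theta_0(\lambda))$, $\pi_1(s,\theta)=s$. The base $I_{\mathcal{C}}$ is the (open interval) set of $s$ such that $(s,\hat\theta_0)$ is a periodic point of $\Phi$ with the itinerary of $\mathcal{C}$. In $t(s_i,\theta_i)$ the sides are $i_i$ and $i_{i+1}$. *)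

(* Defs.v *)
From Stdlib Require Import Reals Lra Lia List.
Import ListNotations.
Open Scope R_scope.

Definition pt : Type := (R * R)%type.
Definition vadd (p q : pt) : pt := (fst p + fst q, snd p + snd q).
Definition vsub (p q : pt) : pt := (fst p - fst q, snd p - snd q).
Definition vscal (a : R) (p : pt) : pt := (a * fst p, a * snd p).
Definition dot (p q : pt) : R := fst p * fst q + snd p * snd q.
Definition det (p q : pt) : R := fst p * snd q - snd p * fst q.
Definition vnorm (p : pt) : R := sqrt (dot p p).

Definition rsum (a b : nat) (f : nat -> R) : R :=
  fold_right Rplus 0 (map f (seq a (b - a))).

(** Side i (0 <= i < d) is the oriented segment from vertex i
    to vertex i+1.  Sides are labelled 0..d-1 instead of 1..d. *)
Definition vert (d : nat) (v : nat -> pt) (i : nat) : pt := v (Nat.modulo i d).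
Definition side_vec d v i : pt := vsub (vert d v (S i)) (vert d v i).
Definition side_len d v i : R := vnorm (side_vec d v i).
Definition unit_dir d v i : pt := vscal (/ side_len d v i) (side_vec d v i).
(** inward unit normal (left normal, boundary oriented anticlockwise) *)
Definition in_normal d v i : pt :=
  let u := unit_dir d v i in (- snd u, fst u).

Definition on_segment (a b p : pt) : Prop :=
  exists tau, 0 <= tau <= 1 /\ p = vadd a (vscal tau (vsub b a)).

(** Simple (simply connected) polygon with boundary oriented anticlockwise:
    nondegenerate sides, non-adjacent sides disjoint, adjacent sides meeting
    only at their common vertex, positive signed area. *)
Definition simple_ccw_polygon (d : nat) (v : nat -> pt) : Prop :=
  (3 <= d)%nat /\
  (forall i, (i < d)%nat -> vert d v i <> vert d v (S i)) /\
  (forall i j p, (i < d)%nat -> (j < d)%nat -> i <> j ->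
     on_segment (vert d v i) (vert d v (S i)) p ->
     on_segment (vert d v j) (vert d v (S j)) p ->
     (j = Nat.modulo (S i) d /\ p = vert d v (S i)) \/
     (i = Nat.modulo (S j) d /\ p = vert d v (S j))) /\
  0 < rsum 0 d (fun i => det (vert d v i) (vert d v (S i))).

Definition on_boundary (d : nat) (v : nat -> pt) (p : pt) : Prop :=
  exists i, (i < d)%nat /\ on_segment (vert d v i) (vert d v (S i)) p.

(** Arc-length parameter: side i corresponds to s in [arc_start i, arc_start (i+1)]. *)
Definition arc_start d v (i : nat) : R := rsum 0 i (fun m => side_len d v m).

(** x_i : arc-length parametrisation of the line l_i extending that of side i *)
Definition xline d v (i : nat) (s : R) : pt :=
  vadd (vert d v i) (vscal (s - arc_start d v i) (unit_dir d v i)).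

(** Convention (forced by the definition of beta and Phi_{i,j} below):
    theta > 0 tilts the direction towards the orientation of the side. *)
Definition ray_dir d v (i : nat) (theta : R) : pt :=
  vadd (vscal (cos theta) (in_normal d v i)) (vscal (sin theta) (unit_dir d v i)).

(** beta_{i,j} = pi - (oriented angle from side i to side j),
    representative in (-pi, pi]: cos beta = - u_i.u_j, sin beta = det(u_i,u_j). *)
Definition beta d v (i j : nat) : R :=
  let c := - dot (unit_dir d v i) (unit_dir d v j) in
  if Rle_dec 0 (det (unit_dir d v i) (unit_dir d v j)) then acos c else - acos c.

(** t(s,theta): oriented length from x_i(s) to the intersection with l_j *)
Definition tlen d v (i j : nat) (s theta : R) : R :=
  det (vsub (vert d v j) (xline d v i s)) (unit_dir d v j) /
  det (ray_dir d v i theta) (unit_dir d v j).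

Definition Phi_ij d v (i j : nat) (st : R * R) : R * R :=
  let s := fst st in let theta := snd st in
  let q := vadd (xline d v i s) (vscal (tlen d v i j s theta) (ray_dir d v i theta)) in
  (arc_start d v j + dot (vsub q (vert d v j)) (unit_dir d v j), beta d v i j - theta).

Definition R_lam (lam : R) (st : R * R) : R * R := (fst st, lam * snd st).

Definition genuine_step d v (i j : nat) (st : R * R) : Prop :=
  let s := fst st in let theta := snd st in
  (i < d)%nat /\ (j < d)%nat /\ i <> j /\
  arc_start d v i < s < arc_start d v (S i) /\
  - (PI / 2) < theta < PI / 2 /\
  - (PI / 2) < beta d v i j - theta < PI / 2 /\
  0 < tlen d v i j s theta /\
  arc_start d v j < fst (Phi_ij d v i j st) < arc_start d v (S j) /\
  (forall tau, 0 < tau < tlen d v i j s theta ->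
     ~ on_boundary d v (vadd (xline d v i s) (vscal tau (ray_dir d v i theta)))).

Definition itI (n : nat) (itin : nat -> nat) (k : nat) : nat :=
  itin (Nat.modulo k (2 * n)).

Definition betaI d v n itin (k : nat) : R :=
  beta d v (itI n itin k) (itI n itin (S k)).

Definition theta0hat d v n itin : R :=
  / INR (2 * n) * rsum 0 (2 * n) (fun k => (-1) ^ (S k) * INR k * betaI d v n itin k).

Definition theta0 d v n itin (lam : R) : R :=
  if Req_dec_T lam 1 then theta0hat d v n itin
  else / (lam ^ (2 * n) - 1) *
       rsum 0 (2 * n) (fun k => (- lam) ^ (2 * n - k) * betaI d v n itin k).

Fixpoint state d v n itin (lam s : R) (k : nat) : R * R :=
  match k with
  | O => (s, theta0 d v n itin lam)
  | S m => R_lam lam (Phi_ij d v (itI n itin m) (itI n itin (S m))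
                                 (state d v n itin lam s m))
  end.

Definition F d v n itin (k : nat) (s lam : R) : R := fst (state d v n itin lam s k).

(* Main.v *)
Require Import Defs.
From Stdlib Require Import Reals Lra Lia List FunctionalExtensionality.
Open Scope R_scope.

Notation dpl := derivable_pt_lim.

Lemma dpl_eq f x l l' : dpl f x l -> l = l' -> dpl f x l'.
Proof. intros H ->; exact H. Qed.

Lemma D_const c x : dpl (fun _ => c) x 0.
Proof. apply derivable_pt_lim_const. Qed.
Lemma D_id x : dpl (fun l => l) x 1.
Proof. apply derivable_pt_lim_id. Qed.
Lemma D_plus f g x a b : dpl f x a -> dpl g x b -> dpl (fun l => f l + g l) x (a + b).
Proof. intros; now apply derivable_pt_lim_plus. Qed.
Lemma D_minus f g x a b : dpl f x a -> dpl g x b -> dpl (fun l => f l - g l) x (a - b).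
Proof. intros; now apply derivable_pt_lim_minus. Qed.
Lemma D_mult f g x a b : dpl f x a -> dpl g x b -> dpl (fun l => f l * g l) x (a * g x + f x * b).
Proof. intros; now apply derivable_pt_lim_mult. Qed.
Lemma D_opp f x a : dpl f x a -> dpl (fun l => - f l) x (- a).
Proof. intros; now apply derivable_pt_lim_opp. Qed.
Lemma D_div f g x a b : dpl f x a -> dpl g x b -> g x <> 0 ->
  dpl (fun l => f l / g l) x ((a * g x - b * f x) / (g x)²).
Proof. intros; now apply derivable_pt_lim_div. Qed.
Lemma D_cos f x a : dpl f x a -> dpl (fun l => cos (f l)) x (- sin (f x) * a).
Proof. intros H. apply (derivable_pt_lim_comp f cos); auto. apply derivable_pt_lim_cos. Qed.
Lemma D_sin f x a : dpl f x a -> dpl (fun l => sin (f l)) x (cos (f x) * a).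
Proof. intros H. apply (derivable_pt_lim_comp f sin); auto. apply derivable_pt_lim_sin. Qed.

Definition vdl (P : R -> pt) x (dP : pt) :=
  dpl (fun l => fst (P l)) x (fst dP) /\ dpl (fun l => snd (P l)) x (snd dP).

Lemma V_const (c : pt) x : vdl (fun _ => c) x (0,0).
Proof. split; apply D_const. Qed.
Lemma V_add P Q x a b : vdl P x a -> vdl Q x b -> vdl (fun l => vadd (P l) (Q l)) x (vadd a b).
Proof. intros [] []; split; simpl; now apply D_plus. Qed.
Lemma V_sub P Q x a b : vdl P x a -> vdl Q x b -> vdl (fun l => vsub (P l) (Q l)) x (vsub a b).
Proof. intros [] []; split; simpl; now apply D_minus. Qed.
Lemma V_scal f P x a b : dpl f x a -> vdl P x b ->
  vdl (fun l => vscal (f l) (P l)) x (vadd (vscal a (P x)) (vscal (f x) b)).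
Proof. intros ? [] ; split; simpl; now apply D_mult. Qed.
Lemma V_dot P Q x a b : vdl P x a -> vdl Q x b ->
  dpl (fun l => dot (P l) (Q l)) x (dot a (Q x) + dot (P x) b).
Proof. intros [] []. unfold dot. eapply dpl_eq.
  apply D_plus; apply D_mult; eassumption. simpl; ring. Qed.
Lemma V_det P Q x a b : vdl P x a -> vdl Q x b ->
  dpl (fun l => det (P l) (Q l)) x (det a (Q x) + det (P x) b).
Proof. intros [] []. unfold det. eapply dpl_eq.
  apply D_minus; apply D_mult; eassumption. simpl; ring. Qed.

Ltac dstep := first
  [ eassumption
  | apply D_const | apply V_const
  | eapply D_div | eapply D_plus | eapply D_minus | eapply D_mult | eapply D_opp
  | eapply D_cos | eapply D_sin
  | eapply V_add | eapply V_sub | eapply V_scal | eapply V_dot | eapply V_det ].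

Lemma step_raw d v i j (P : R -> R * R) x dS dF :
  dpl (fun l => fst (P l)) x dS -> dpl (fun l => snd (P l)) x dF ->
  det (ray_dir d v i (snd (P x))) (unit_dir d v j) <> 0 ->
  exists L, dpl (fun l => fst (Phi_ij d v i j (P l))) x L /\
   L = (det (ray_dir d v i (snd (P x))) (unit_dir d v i) * dot (unit_dir d v j) (unit_dir d v j) * dS
        - tlen d v i j (fst (P x)) (snd (P x)) *
          det (vadd (vscal (- sin (snd (P x))) (in_normal d v i)) (vscal (cos (snd (P x))) (unit_dir d v i)))
              (ray_dir d v i (snd (P x))) * dot (unit_dir d v j) (unit_dir d v j) * dF)
       / det (ray_dir d v i (snd (P x))) (unit_dir d v j).
Proof.
  intros HS HF Hd.
  eexists; split.
  { unfold Phi_ij, tlen, xline, ray_dir; cbn [fst snd].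
    repeat dstep. }
  cbv beta.
  revert Hd. unfold tlen, xline, ray_dir, in_normal.
  generalize (unit_dir d v i) (unit_dir d v j) (vert d v i) (vert d v j).
  intros [a b] [c e] [p q] [r s] Hd.
  unfold vadd, vsub, vscal, dot, det in *; cbn [fst snd] in *.
  unfold Rsqr. field. auto. Qed.

Lemma unit_norm d v i : vert d v i <> vert d v (S i) ->
  dot (unit_dir d v i) (unit_dir d v i) = 1.
Proof.
  intros Hne. unfold unit_dir, side_len, vnorm, side_vec.
  destruct (vert d v (S i)) as [a b] eqn:E1, (vert d v i) as [c e] eqn:E2.
  unfold vsub, vscal, dot; cbn [fst snd].
  assert (Hp : 0 < (a - c) * (a - c) + (b - e) * (b - e)).
  { destruct (Req_dec (a - c) 0), (Req_dec (b - e) 0).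
    - exfalso; apply Hne; f_equal; lra.
    - assert (0 < (b-e)*(b-e)) by (apply Rsqr_pos_lt; auto). nra.
    - assert (0 < (a-c)*(a-c)) by (apply Rsqr_pos_lt; auto). nra.
    - assert (0 < (b-e)*(b-e)) by (apply Rsqr_pos_lt; auto). nra. }
  set (N := (a - c) * (a - c) + (b - e) * (b - e)) in *.
  assert (Hs : sqrt N * sqrt N = N) by (apply sqrt_sqrt; lra).
  assert (0 < sqrt N) by (apply sqrt_lt_R0; lra).
  transitivity (((a - c) * (a - c) + (b - e) * (b - e)) / (sqrt N * sqrt N)).
  { field. lra. }
  fold N. rewrite Hs. field. lra.
Qed.

Lemma det_ray_self d v i th :
  det (ray_dir d v i th) (unit_dir d v i) = - cos th * dot (unit_dir d v i) (unit_dir d v i).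
Proof. unfold ray_dir, in_normal; destruct (unit_dir d v i) as [a b].
  unfold vadd, vscal, det, dot; cbn [fst snd]; ring. Qed.

Lemma det_rayth_ray d v i th :
  det (vadd (vscal (- sin th) (in_normal d v i)) (vscal (cos th) (unit_dir d v i)))
      (ray_dir d v i th) = dot (unit_dir d v i) (unit_dir d v i).
Proof. unfold ray_dir, in_normal; destruct (unit_dir d v i) as [a b].
  unfold vadd, vscal, det, dot; cbn [fst snd].
  pose proof (sin2_cos2 th). unfold Rsqr in H. nra. Qed.

Lemma det_ray_other d v i j th :
  dot (unit_dir d v i) (unit_dir d v i) = 1 ->
  dot (unit_dir d v j) (unit_dir d v j) = 1 ->
  det (ray_dir d v i th) (unit_dir d v j) = cos (beta d v i j - th).
Proof.
  intros Hi Hj. unfold beta, ray_dir, in_normal.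
  destruct (unit_dir d v i) as [a b], (unit_dir d v j) as [c e].
  unfold vadd, vscal, det, dot in *; cbn [fst snd] in *.
  assert (Hid : (a*c+b*e)*(a*c+b*e) + (a*e-b*c)*(a*e-b*c) = 1).
  { transitivity ((a*a+b*b)*(c*c+e*e)); [ring|]. rewrite Hi, Hj; ring. }
  assert (Hc : -1 <= -(a*c+b*e) <= 1).
  { set (X := a*c+b*e) in *; set (Y := a*e-b*c) in *.
    assert (0 <= Y*Y) by nra. split; nra. }
  assert (Hsq : sqrt (1 - (-(a*c+b*e))²) = Rabs (a*e-b*c)).
  { rewrite <- sqrt_Rsqr_abs. f_equal. unfold Rsqr. lra. }
  rewrite cos_minus.
  destruct (Rle_dec 0 (a*e-b*c)).
  - rewrite cos_acos, sin_acos, Hsq, Rabs_pos_eq by auto. ring.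
  - rewrite cos_neg, sin_neg, cos_acos, sin_acos, Hsq, Rabs_left by (auto; lra). ring.
Qed.


Lemma fr_app (l : list R) x : fold_right Rplus 0 (l ++ x :: nil) = fold_right Rplus 0 l + x.
Proof. induction l; simpl; [ring | rewrite IHl; ring]. Qed.

Lemma rsum_S a b f : (a <= b)%nat -> rsum a (S b) f = rsum a b f + f b.
Proof. intros H. unfold rsum. replace (S b - a)%nat with (S (b - a)) by lia.
  rewrite seq_S, map_app. cbn [map]. rewrite fr_app. do 2 f_equal. lia. Qed.

Lemma rsum_nil a b f : (b <= a)%nat -> rsum a b f = 0.
Proof. intros H. unfold rsum. replace (b - a)%nat with 0%nat by lia. reflexivity. Qed.

Lemma rsum_ext_in a b f g : (forall k, (a <= k < b)%nat -> f k = g k) -> rsum a b f = rsum a b g.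
Proof. intros H. unfold rsum. f_equal. apply map_ext_in. intros k Hk.
  apply in_seq in Hk. apply H. lia. Qed.

Lemma rsum_plus a b f g : rsum a b (fun k => f k + g k) = rsum a b f + rsum a b g.
Proof. unfold rsum. induction (seq a (b - a)); simpl; [ring| rewrite IHl; ring]. Qed.

Lemma rsum_scal a b f c : rsum a b (fun k => f k * c) = rsum a b f * c.
Proof. unfold rsum. induction (seq a (b - a)); simpl; [ring| rewrite IHl; ring]. Qed.

Lemma rsum_scal_l a b f c : rsum a b (fun k => c * f k) = c * rsum a b f.
Proof. unfold rsum. induction (seq a (b - a)); simpl; [ring| rewrite IHl; ring]. Qed.

Lemma swap_sum (t a : nat -> R) N :
  rsum 0 N (fun i => t i * rsum 1 (S i) a) = rsum 1 N (fun k => a k * rsum k N t).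
Proof.
  induction N as [|N IH].
  - rewrite !rsum_nil by lia. reflexivity.
  - rewrite rsum_S by lia. rewrite IH.
    destruct N as [|N].
    + rewrite !rsum_nil by lia. ring.
    + rewrite (rsum_S 1 (S N) (fun k => a k * rsum k (S (S N)) t)) by lia.
      rewrite (rsum_ext_in 1 (S N) (fun k => a k * rsum k (S (S N)) t)
                 (fun k => a k * rsum k (S N) t + a k * t (S N))).
      2:{ intros k Hk. rewrite rsum_S by lia. ring. }
      rewrite rsum_plus, rsum_scal.
      rewrite (rsum_S (S N) (S N)) by lia. rewrite (rsum_nil (S N) (S N)) by lia.
      rewrite (rsum_S 1 (S N) a) by lia. ring.
Qed.

Section Main.
Variables (d : nat) (v : nat -> pt) (n : nat) (itin : nat -> nat) (s D : R).

Definition ii k := itI n itin k.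
Definition s1 k := fst (state d v n itin 1 s k).
Definition th1 k := snd (state d v n itin 1 s k).
Definition tt k := tlen d v (ii k) (ii (S k)) (s1 k) (th1 k).
Fixpoint dphi k := match k with O => D | S m => (betaI d v n itin m - th1 m) - dphi m end.
Fixpoint ds k := match k with O => 0 | S m => (- cos (th1 m) * ds m - tt m * dphi m) / cos (th1 (S m)) end.

Lemma th1_S m : th1 (S m) = betaI d v n itin m - th1 m.
Proof. unfold th1, betaI. cbn [state R_lam snd]. unfold Phi_ij at 1. cbn [snd]. ring. Qed.

Hypothesis Hpoly : simple_ccw_polygon d v.
Hypothesis Hgen : forall k, (k < 2 * n)%nat ->
     genuine_step d v (itI n itin k) (itI n itin (S k)) (state d v n itin 1 s k).
Hypothesis HD : dpl (theta0 d v n itin) 1 D.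

Lemma unit_ii k : (k < 2 * n)%nat -> dot (unit_dir d v (ii k)) (unit_dir d v (ii k)) = 1 /\
   dot (unit_dir d v (ii (S k))) (unit_dir d v (ii (S k))) = 1.
Proof.
  intros Hk. destruct (Hgen k Hk) as (H1 & H2 & _).
  destruct Hpoly as (_ & Hv & _).
  split; apply unit_norm; apply Hv; assumption.
Qed.

Lemma cos_pos k : (k < 2 * n)%nat -> 0 < cos (th1 (S k)) /\ 0 < cos (th1 k).
Proof.
  intros Hk. destruct (Hgen k Hk) as (_ & _ & _ & _ & [H3 H4] & [H5 H6] & _).
  rewrite th1_S. unfold th1, betaI, ii in *.
  split; apply cos_gt_0; auto.
Qed.

Lemma deriv_state k : (k <= 2 * n)%nat ->
  dpl (fun l => fst (state d v n itin l s k)) 1 (ds k) /\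
  dpl (fun l => snd (state d v n itin l s k)) 1 (dphi k).
Proof.
  induction k as [|m IH]; intros Hk.
  - split; [change (dpl (fun _ => s) 1 0); apply D_const | exact HD].
  - destruct IH as [IH1 IH2]; [lia|].
    assert (Hm : (m < 2 * n)%nat) by lia.
    destruct (unit_ii m Hm) as [U1 U2].
    destruct (cos_pos m Hm) as [C1 C2].
    assert (Hden : det (ray_dir d v (ii m) (th1 m)) (unit_dir d v (ii (S m))) = cos (th1 (S m))).
    { rewrite det_ray_other by auto. rewrite th1_S. reflexivity. }
    split.
    + destruct (step_raw d v (ii m) (ii (S m)) (fun l => state d v n itin l s m) 1 (ds m) (dphi m) IH1 IH2)
        as [L [HL EL]].
      { change (det (ray_dir d v (ii m) (th1 m)) (unit_dir d v (ii (S m))) <> 0). lra. }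
      eapply dpl_eq. exact HL.
      rewrite EL. change (snd (state d v n itin 1 s m)) with (th1 m).
      change (fst (state d v n itin 1 s m)) with (s1 m).
      rewrite Hden, det_ray_self, det_rayth_ray, U1, U2. cbn [ds]. unfold tt. field. lra.
    + change (dpl (fun l => l * (betaI d v n itin m - snd (state d v n itin l s m))) 1 (dphi (S m))).
      eapply dpl_eq. apply D_mult. apply D_id. apply D_minus. apply D_const. exact IH2.
      cbn [dphi]. fold (th1 m). ring.
Qed.

Lemma A2 k : (-1) ^ k * dphi k = D + rsum 1 (S k) (fun j => (-1) ^ j * th1 j).
Proof.
  induction k as [|m IH].
  - rewrite rsum_nil by lia. simpl. ring.
  - rewrite rsum_S by lia.
    assert (E : D = (-1) ^ m * dphi m - rsum 1 (S m) (fun j => (-1) ^ j * th1 j)) by (rewrite IH; ring).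
    rewrite E. cbn [dphi]. rewrite <- th1_S. simpl pow. ring.
Qed.

Lemma A1 k : (k <= 2 * n)%nat ->
  cos (th1 k) * (-1) ^ k * ds k = rsum 0 k (fun i => (-1) ^ i * tt i * dphi i).
Proof.
  induction k as [|m IH]; intros Hk.
  - rewrite rsum_nil by lia. simpl. ring.
  - rewrite rsum_S by lia. rewrite <- IH by lia.
    destruct (cos_pos m) as [C1 C2]; [lia|].
    cbn [ds]. simpl pow. field. lra.
Qed.

Lemma A4 m : (-1) ^ m * th1 m = th1 0 - rsum 0 m (fun k => (-1) ^ k * betaI d v n itin k).
Proof.
  induction m as [|m IH].
  - rewrite rsum_nil by lia. simpl. ring.
  - rewrite rsum_S by lia. rewrite th1_S. simpl pow.
    replace (th1 0 - (rsum 0 m (fun k => (-1) ^ k * betaI d v n itin k) + (-1) ^ m * betaI d v n itin m))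
      with ((-1) ^ m * th1 m - (-1) ^ m * betaI d v n itin m) by (rewrite IH; ring).
    ring.
Qed.

Lemma final_formula : (1 <= n)%nat -> th1 (2 * n) = th1 0 ->
  ds (2 * n) = rsum 0 (2 * n) (fun i => tt i / cos (th1 0) * D) +
     rsum 1 (2 * n) (fun k => (-1) ^ k * th1 k * rsum k (2 * n) (fun i => tt i / cos (th1 0))).
Proof.
  intros Hn Hper.
  destruct (cos_pos 0) as [_ C0]; [lia|].
  set (c := cos (th1 0)) in *.
  pose proof (A1 (2 * n) (le_n _)) as H1.
  rewrite Hper, pow_1_even in H1. fold c in H1.
  rewrite (rsum_ext_in 0 (2*n) _ (fun i => tt i * D + tt i * rsum 1 (S i) (fun j => (-1) ^ j * th1 j))) in H1.
  2:{ intros k _. rewrite <- Rmult_plus_distr_l, <- A2. ring. }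
  rewrite rsum_plus, rsum_scal, swap_sum in H1.
  rewrite (rsum_ext_in 0 (2*n) (fun i => tt i / c * D) (fun i => tt i * (/ c * D))).
  2:{ intros; unfold Rdiv; ring. }
  rewrite (rsum_ext_in 1 (2*n) (fun k => (-1) ^ k * th1 k * rsum k (2 * n) (fun i => tt i / c))
             (fun k => (-1) ^ k * th1 k * rsum k (2 * n) tt * / c)).
  2:{ intros k _. unfold Rdiv. rewrite rsum_scal. ring. }
  rewrite !rsum_scal.
  apply (Rmult_eq_reg_l c); [|lra].
  replace (c * ds (2*n)) with (c * 1 * ds (2*n)) by ring. rewrite H1.
  field. lra.
Qed.

End Main.

Definition G m l := rsum 0 m (fun j => l ^ j).

Lemma G_prop m l : (l - 1) * G m l = l ^ m - 1.
Proof. unfold G. induction m as [|m IH].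
  - rewrite rsum_nil by lia. simpl. ring.
  - rewrite rsum_S by lia. rewrite Rmult_plus_distr_l, IH. simpl. ring. Qed.

Lemma G_one m : G m 1 = INR m.
Proof. unfold G. induction m as [|m IH].
  - rewrite rsum_nil by lia. simpl. ring.
  - rewrite rsum_S by lia. rewrite IH, pow1, S_INR. ring. Qed.

Lemma ex_rsum a b (f : nat -> R -> R) x :
  (forall k, exists L, dpl (f k) x L) -> exists L, dpl (fun l => rsum a b (fun k => f k l)) x L.
Proof.
  intros H. unfold rsum. induction (seq a (b - a)) as [|k L IH].
  - exists 0. change (dpl (fun _ => 0) x 0). apply D_const.
  - destruct IH as [L1 H1]. destruct (H k) as [L2 H2].
    exists (L2 + L1). simpl. apply D_plus; auto.
Qed.

Lemma ex_G m x : exists L, dpl (G m) x L.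
Proof. apply (ex_rsum 0 m (fun j l => l ^ j)). intros k. eexists. apply derivable_pt_lim_pow. Qed.

Lemma neg1_sym N k : (k <= 2 * N)%nat -> (-1) ^ (2 * N - k) = (-1) ^ k.
Proof.
  intros H.
  assert (S1 : (-1) ^ k * (-1) ^ k = 1).
  { rewrite <- pow_add. replace (k + k)%nat with (2 * k)%nat by lia. apply pow_1_even. }
  assert (S2 : (-1) ^ (2 * N - k) * (-1) ^ k = 1).
  { rewrite <- pow_add. replace (2 * N - k + k)%nat with (2 * N)%nat by lia. apply pow_1_even. }
  transitivity ((-1) ^ (2 * N - k) * ((-1) ^ k * (-1) ^ k)); [rewrite S1; ring|].
  rewrite <- Rmult_assoc, S2. ring.
Qed.

Section Theta.
Variables (d : nat) (v : nat -> pt) (n : nat) (itin : nat -> nat).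
Let N := (2 * n)%nat.
Let b := betaI d v n itin.
Definition Mf l := rsum 0 N (fun k => b k * (-1) ^ k * G (N - k) l).

Hypothesis Hn : (1 <= n)%nat.
Hypothesis Hsum : rsum 0 N (fun k => (-1) ^ k * b k) = 0.

Lemma theta0_eq l : theta0 d v n itin l = Mf l / G N l.
Proof.
  unfold theta0. destruct (Req_dec_T l 1) as [->|Hl].
  - unfold theta0hat, Mf. rewrite (G_one N). fold N b.
    rewrite (rsum_ext_in 0 N (fun k => b k * (-1) ^ k * G (N - k) 1)
               (fun k => (-1) ^ k * b k * INR N + (-1) ^ (S k) * INR k * b k)).
    2:{ intros k Hk. rewrite G_one, minus_INR by lia. simpl pow. ring. }
    rewrite rsum_plus, rsum_scal, Hsum.
    assert (0 < INR N) by (apply lt_0_INR; unfold N; lia).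
    field. lra.
  - fold N b.
    rewrite (rsum_ext_in 0 N (fun k => (- l) ^ (N - k) * b k)
               (fun k => (l - 1) * (b k * (-1) ^ k * G (N - k) l) + (-1) ^ k * b k)).
    2:{ intros k Hk. replace (- l) with (-1 * l) by ring. rewrite Rpow_mult_distr.
        unfold N; rewrite neg1_sym by lia. fold N.
        assert (E := G_prop (N - k) l). 
        replace (l ^ (N - k)) with ((l - 1) * G (N - k) l + 1) by lra. ring. }
    rewrite rsum_plus, Hsum, rsum_scal_l. fold (Mf l).
    rewrite <- (G_prop N l), Rinv_mult.
    assert (l - 1 <> 0) by (intro; apply Hl; lra).
    unfold Rdiv.
    transitivity ((/ (l - 1) * (l - 1)) * (Mf l * / G N l)); [ring|].
    rewrite Rinv_l by auto. ring.
Qed.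

Lemma theta0_deriv : exists D, dpl (theta0 d v n itin) 1 D.
Proof.
  assert (HM : exists L, dpl Mf 1 L).
  { apply (ex_rsum 0 N (fun k l => b k * (-1) ^ k * G (N - k) l)).
    intros k. destruct (ex_G (N - k) 1) as [L HL]. eexists.
    apply D_mult. apply D_const. exact HL. }
  destruct HM as [L1 H1]. destruct (ex_G N 1) as [L2 H2].
  eexists. apply (derivable_pt_lim_ext (fun l => Mf l / G N l)).
  { intros z. symmetry. apply theta0_eq. }
  apply D_div; [exact H1 | exact H2 |]. cbv beta. rewrite G_one. apply not_0_INR. unfold N; lia.
Qed.
End Theta.

Theorem lemma3p9 (d : nat) (v : nat -> pt) (n : nat) (itin : nat -> nat) (s : R) :
  simple_ccw_polygon d v ->
  (2 <= n)%nat ->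
  (forall k, (k < 2 * n)%nat ->
     genuine_step d v (itI n itin k) (itI n itin (S k)) (state d v n itin 1 s k)) ->
  state d v n itin 1 s (2 * n) = state d v n itin 1 s 0 ->
  let sk := fun k => fst (state d v n itin 1 s k) in
  let thk := fun k => snd (state d v n itin 1 s k) in
  let t := fun i => tlen d v (itI n itin i) (itI n itin (S i)) (sk i) (thk i) in
  exists D : R,
    derivable_pt_lim (theta0 d v n itin) 1 D /\
    derivable_pt_lim (fun lam => F d v n itin (2 * n) s lam) 1
      (rsum 0 (2 * n) (fun i => t i / cos (thk 0%nat) * D) +
       rsum 1 (2 * n) (fun k => (-1) ^ k * thk k *
                                 rsum k (2 * n) (fun i => t i / cos (thk 0%nat)))).
Proof.
  intros Hpoly Hn Hgen Hper sk thk t.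
  assert (Hn1 : (1 <= n)%nat) by lia.
  assert (Hth : th1 d v n itin s (2 * n) = th1 d v n itin s 0).
  { unfold th1. rewrite Hper. reflexivity. }
  assert (Hsum : rsum 0 (2 * n) (fun k => (-1) ^ k * betaI d v n itin k) = 0).
  { pose proof (A4 d v n itin s (2 * n)) as E. rewrite pow_1_even, Hth in E. lra. }
  destruct (theta0_deriv d v n itin Hn1 Hsum) as [D HD].
  exists D; split; [exact HD|].
  destruct (deriv_state d v n itin s D Hpoly Hgen HD (2 * n) (le_n _)) as [H _].
  eapply dpl_eq; [exact H|].
  rewrite (final_formula d v n itin s D Hgen Hn1 Hth).
  reflexivity.
Qed.
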